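(* Let $n\geq2$ and $1\leq k\leq n$ be integers and let $\overline\eta:\Lambda^1(\mathbb R^n)\to\Lambda^k(\mathbb R^n)$ be a linear map. Then there is $\eta\in\Lambda^{k-1}(\mathbb R^n)$ such that $\overline\eta(\theta)=\theta\wedge\eta$ for every $\theta\in\Lambda^1(\mathbb R^n)$ if and only if $\theta\wedge\overline\eta(\theta)=0$ for every $\theta\in\Lambda^1(\mathbb R^n)$.
   Context: $\Lambda^k(\mathbb R^n)$ denotes the real vector space of alternating $k$-linear forms on $\mathbb R^n$, with $\Lambda^0(\mathbb R^n)=\mathbb R$, and $\wedge$ is the exterior product. *)

(* Defs.v *)
From HB Require Import structures.
From mathcomp Require Import all_boot all_order all_algebra all_fingroup.
From mathcomp Require Import reals.
Set Implicit Arguments. Unset Strict Implicit. Unset Printing Implicit Defensive.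
Import Order.TTheory GRing.Theory Num.Theory.
Local Open Scope ring_scope.

Section Forms.
Variables (R : realType) (n : nat).

Definition mform (k : nat) := ('I_k -> 'rV[R]_n) -> R.

Definition upd (k : nat) (v : 'I_k -> 'rV[R]_n) (i : 'I_k) (x : 'rV[R]_n) :
  'I_k -> 'rV[R]_n := fun j => if j == i then x else v j.

Definition multilinear (k : nat) (f : mform k) : Prop :=
  forall (v : 'I_k -> 'rV[R]_n) (i : 'I_k) (a : R) (x y : 'rV[R]_n),
    f (upd v i (a *: x + y)) = a * f (upd v i x) + f (upd v i y).

Definition alternating (k : nat) (f : mform k) : Prop :=
  forall (v : 'I_k -> 'rV[R]_n) (i j : 'I_k), i != j -> v i = v j -> f v = 0.

Definition is_kform (k : nat) (f : mform k) : Prop :=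
  multilinear f /\ alternating f.

(* exterior product (Alt convention):
   (α ∧ β)(v) = 1/(p! q!) Σ_σ sgn σ α(v_σ(1..p)) β(v_σ(p+1..p+q)) *)
Definition wedge (p q : nat) (a : mform p) (b : mform q) : mform (p + q) :=
  fun v => (p`!%:R * q`!%:R)^-1 *
    \sum_(s : 'S_(p + q)) (-1) ^+ (odd_perm s) *
       a (fun i => v (s (lshift q i))) * b (fun j => v (s (rshift p j))).

Definition cast_form (p q : nat) (e : p = q) (f : mform p) : mform q :=
  fun v => f (fun i => v (cast_ord e i)).

Definition form_add (k : nat) (f g : mform k) : mform k := fun v => f v + g v.
Definition form_scale (k : nat) (a : R) (f : mform k) : mform k := fun v => a * f v.
Definition form0 (k : nat) : mform k := fun _ => 0.

Definition linear_map_1k (k : nat) (L : mform 1 -> mform k) : Prop :=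
  (forall th, is_kform th -> is_kform (L th)) /\
  (forall (a : R) th1 th2, is_kform th1 -> is_kform th2 ->
     L (form_add (form_scale a th1) th2) = form_add (form_scale a (L th1)) (L th2)).

End Forms.

(* Main.v *)
Require Import Defs.
From HB Require Import structures.
From mathcomp Require Import all_boot all_order all_algebra all_fingroup.
From mathcomp Require Import reals.
From Stdlib Require Import FunctionalExtensionality.
From mathcomp Require Import ring zify.
Set Implicit Arguments. Unset Strict Implicit. Unset Printing Implicit Defensive.
Import Order.TTheory GRing.Theory Num.Theory.
Local Open Scope ring_scope.

Section Aux.
Variables (R : realType) (n : nat).
Notation V := 'rV[R]_n.

Definition antisym k (f : mform R n k) :=
  forall (v : 'I_k -> V) (s : 'S_k), f (fun i => v (s i)) = (-1) ^+ s * f v.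

Lemma upd_same k (v : 'I_k -> V) i x : upd v i x i = x.
Proof. by rewrite /upd eqxx. Qed.
Lemma upd_other k (v : 'I_k -> V) i j x : j != i -> upd v i x j = v j.
Proof. by rewrite /upd => /negbTE ->. Qed.
Lemma upd_id k (v : 'I_k -> V) i : upd v i (v i) = v.
Proof. by apply: functional_extensionality => j; rewrite /upd; case: eqP => // ->. Qed.
Lemma upd_comm k (v : 'I_k -> V) i j x y : i != j ->
  upd (upd v i x) j y = upd (upd v j y) i x.
Proof.
move=> ij; apply: functional_extensionality => l; rewrite /upd /=.
case: (eqVneq l j) => [Elj|Nlj]; case: (eqVneq l i) => [Eli|Nli] //.
by move: ij; rewrite -Eli -Elj eqxx.
Qed.

Lemma mlinD k (f : mform R n k) : multilinear f ->
  forall v i x y, f (upd v i (x + y)) = f (upd v i x) + f (upd v i y).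
Proof. move=> H v i x y. have := H v i 1 x y. by rewrite scale1r mul1r. Qed.

Lemma swap_form k (f : mform R n k) : is_kform f -> forall v i j x y, i != j ->
  f (upd (upd v i x) j y) = - f (upd (upd v i y) j x).
Proof.
move=> [Hm Ha] v i j x y ij.
pose g x y := f (upd (upd v i x) j y).
have g2 : forall x y1 y2, g x (y1 + y2) = g x y1 + g x y2.
  by move=> ? ? ?; rewrite /g mlinD.
have g1 : forall x1 x2 y, g (x1 + x2) y = g x1 y + g x2 y.
  by move=> ? ? ?; rewrite /g !(upd_comm _ _ _ ij) mlinD.
have g0 : forall x, g x x = 0.
  move=> z; apply: (Ha _ i j ij).
  by rewrite upd_same upd_other ?upd_same // eq_sym.
have := g0 (x + y); rewrite g1 !g2 !g0 add0r addr0 => /eqP.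
by rewrite addr_eq0 => /eqP.
Qed.

Lemma tperm_upd k (v : 'I_k -> V) i j :
  (fun l => v (tperm i j l)) = upd (upd v i (v j)) j (v i).
Proof.
apply: functional_extensionality => l; rewrite /upd.
case: tpermP => [->|->|/eqP li /eqP lj]; rewrite ?eqxx.
- by case: eqP => // ->.
- done.
- by rewrite (negbTE li) (negbTE lj).
Qed.

Lemma form_antisym k (f : mform R n k) : is_kform f -> antisym f.
Proof.
move=> Hf v s; case: (prod_tpermP s) => ts -> {s}.
elim: ts v => [|t ts IH] v /=.
  move=> _; rewrite big_nil odd_perm1 expr0 mul1r.
  by congr f; apply: functional_extensionality => i; rewrite perm1.
case/andP=> dt dts; rewrite big_cons.
set P := (\prod_(t0 <- ts) tperm t0.1 t0.2)%g.
set w := (fun i => v (P i)).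
have -> : (fun i => v ((tperm t.1 t.2 * P)%g i)) = upd (upd w t.1 (w t.2)) t.2 (w t.1).
  by rewrite -tperm_upd; apply: functional_extensionality => l; rewrite permM.
rewrite swap_form // upd_id upd_id /w IH // odd_permM odd_tperm dt.
by rewrite signr_addb expr1 mulN1r mulNr.
Qed.
Lemma sum_lift_perm (m : nat) (F : 'S_m.+1 -> R) :
  \sum_(s : 'S_m.+1) F s = \sum_(i : 'I_m.+1) \sum_(p : 'S_m) F (lift_perm ord0 i p).
Proof.
rewrite (partition_big (fun s : 'S_m.+1 => s ord0) predT) //=.
apply: eq_bigr => j0 _.
rewrite (reindex (lift_perm ord0 j0)); last first.
  pose ulsf i (s : 'S_m.+1) k := odflt k (unlift (s i) (s (lift i k))).
  have ulsfK i (s : 'S_m.+1) k: lift (s i) (ulsf i s k) = s (lift i k).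
    rewrite /ulsf; have:= neq_lift i k.
    by rewrite -(can_eq (permK s)) => /unlift_some[] ? ? ->.
  have inj_ulsf: injective (ulsf ord0 _).
    move=> s; apply: can_inj (ulsf (s ord0) s^-1%g) _ => k'.
    by rewrite {1}/ulsf ulsfK !permK liftK.
  exists (fun s => perm (inj_ulsf s)) => [s _ | s].
    by apply/permP=> k'; rewrite permE /ulsf lift_perm_lift lift_perm_id liftK.
  move/(s _ =P _) => si0; apply/permP=> k.
  case: (unliftP ord0 k) => [k'|] ->; rewrite ?lift_perm_id //.
  by rewrite lift_perm_lift -si0 permE ulsfK.
by apply: eq_big => [s | s _]; rewrite ?lift_perm_id ?eqxx.
Qed.

Lemma wedge1E q (a : mform R n 1) (b : mform R n q) : antisym b ->
  forall v : 'I_(1+q) -> V, wedge a b v =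
    \sum_(i < q.+1) (-1) ^+ i * a (fun _ => v i) * b (fun j => v (lift i j)).
Proof.
move=> Hb v; rewrite /wedge sum_lift_perm.
have e1 : forall (i0 : 'I_1), (lshift q i0 : 'I_q.+1) = ord0.
  by move=> i0; apply: val_inj; rewrite /= (ord1 i0).
have e2 : forall (j : 'I_q), (rshift 1 j : 'I_q.+1) = lift ord0 j.
  by move=> j; apply: val_inj.
have H : forall i : 'I_q.+1, \sum_(p : 'S_q)
        (-1) ^+ lift_perm ord0 i p *
        a (fun i0 : 'I_1 => v (lift_perm ord0 i p (lshift q i0))) *
        b (fun j : 'I_q => v (lift_perm ord0 i p (rshift 1 j))) =
   q`!%:R * ((-1) ^+ i * a (fun=> v i) * b (fun j : 'I_q => v (lift i j))).
  move=> i.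
  rewrite mulr_natl -card_Sn -sumr_const; apply: eq_bigr => p _.
  have -> : (fun i0 : 'I_1 => v (lift_perm ord0 i p (lshift q i0))) = (fun=> v i).
    by apply: functional_extensionality => i0; rewrite e1 lift_perm_id.
  have -> : (fun j : 'I_q => v (lift_perm ord0 i p (rshift 1 j))) =
      (fun j => v (lift i (p j))).
    by apply: functional_extensionality => j; rewrite e2 lift_perm_lift.
  have Hbp := Hb (fun j => v (lift i j)) p; simpl in Hbp.
  rewrite Hbp odd_lift_perm; move: (odd_perm p) => c.
  rewrite !signr_addb -[(-1) ^+ nat_of_ord i]signr_odd.
  rewrite (_ : odd (@ord0 q) = false) // expr0 mul1r.
  set s := (-1) ^+ c.
  have s2 : s * s = 1 by rewrite -expr2 sqrr_sign.
  rewrite -[RHS]mulr1 -s2; ring.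
rewrite (eq_bigr (fun i : 'I_q.+1 => q`!%:R * ((-1) ^+ i * a (fun=> v i) * b (fun j : 'I_q => v (lift i j))))); last by move=> i _; apply: H.
rewrite -big_distrr /= mulrA mul1r mulVf ?mul1r //.
by rewrite pnatr_eq0 -lt0n fact_gt0.
Qed.

Lemma wedge_antisym p q (a : mform R n p) (b : mform R n q) : antisym (wedge a b).
Proof.
move=> v r; rewrite /wedge mulrCA; congr (_ * _).
rewrite [in RHS](reindex_inj (mulIg r)) big_distrr; apply: eq_bigr => s _ /=.
rewrite odd_permM; move: (odd_perm s) (odd_perm r) => c d.
rewrite signr_addb.
have -> : (fun i => v ((s * r)%g (lshift q i))) = (fun i => v (r (s (lshift q i)))).
  by apply: functional_extensionality => i; rewrite permM.
have -> : (fun i => v ((s * r)%g (rshift p i))) = (fun i => v (r (s (rshift p i)))).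
  by apply: functional_extensionality => i; rewrite permM.
have s2 : (-1) ^+ d * (-1) ^+ d = 1 :> R by rewrite -expr2 sqrr_sign.
set x := (-1) ^+ d; set y := (-1) ^+ c.
set A := a _; set B := b _.
have -> : x * (y * x * A * B) = (x * x) * (y * A * B) by ring.
by rewrite s2 mul1r.
Qed.
Lemma lift_swap m (x : 'I_m.+2) (j : 'I_m.+1) : exists j' : 'I_m.+1,
  lift (lift x j) j' = x /\ (forall l : 'I_m, lift x (lift j l) = lift (lift x j) (lift j' l))
  /\ odd (x + j) = ~~ odd (lift x j + j').
Proof.
have xlt := ltn_ord x; have jlt := ltn_ord j.
case: (leqP x j) => xj.
  have xm : (x < m.+1)%N by lia.
  exists (Ordinal xm); split; [|split].
  - apply: val_inj => /=; rewrite /bump; lia.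
  - move=> l; apply: val_inj => /=; rewrite /bump; lia.
  - rewrite /= /bump xj /= !oddD /=. by case: (odd x); case: (odd j).
have xm : (x.-1 < m.+1)%N by lia.
exists (Ordinal xm); split; [|split].
- apply: val_inj => /=; rewrite /bump; lia.
- move=> l; apply: val_inj => /=; rewrite /bump; lia.
- rewrite /= /bump (_ : (x <= j)%N = false) /=; last by lia.
  case: (nat_of_ord x) xj => [|x'] //= _. rewrite !oddD /=. by case: (odd x'); case: (odd j).
Qed.

Lemma wedge_self q (a : mform R n 1) (b : mform R n q) : antisym b ->
  forall v : 'I_(1 + (1 + q)) -> V, wedge a (wedge a b) v = 0.
Proof.
move=> Hb v; rewrite wedge1E; last exact: wedge_antisym.
pose T (i : 'I_q.+2) (j : 'I_q.+1) := (-1) ^+ i * a (fun _ => v i) *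
  ((-1) ^+ j * a (fun _ => v (lift i j)) * b (fun l => v (lift i (lift j l)))).
pose D (x y : 'I_q.+2) := if unlift x y is Some j then T x j else 0.
have E : forall i : 'I_q.+2, (-1) ^+ i * a (fun _ => v i) * wedge a b (fun j => v (lift i j))
   = \sum_(y < q.+2) D i y.
  move=> i; rewrite wedge1E // big_distrr (bigD1_ord i) //= /D unlift_none add0r.
  by apply: eq_bigr => j _; rewrite (@liftK q.+2 i j) /T.
rewrite (eq_bigr _ (fun i _ => E i)).
have anti : forall x y, D x y = - D y x.
  move=> x y; rewrite /D; case: unliftP => [j ->|->]; last by rewrite unlift_none oppr0.
  have [j' [e1 [e2 e3]]] := lift_swap x j.
  rewrite -[X in unlift _ X]e1 (@liftK q.+2 (lift x j) j') /T.
  have -> : (fun l => v (lift (lift x j) (lift j' l))) = (fun l => v (lift x (lift j l))).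
    by apply: functional_extensionality => l; rewrite e2.
  rewrite e1.
  have sg : (-1) ^+ x * (-1) ^+ j = - ((-1) ^+ (lift x j) * (-1) ^+ j') :> R.
    rewrite -!exprD -signr_odd e3 -[RHS]mulN1r -[in RHS]signr_odd.
    by case: odd; rewrite /= ?expr1 ?expr0 ?mulN1r ?opprK ?mulr1.
  set A := a (fun=> v x); set B := a (fun=> v (lift x j)); set C := b _.
  transitivity (((-1) ^+ x * (-1) ^+ j) * A * B * C); first by ring.
  rewrite sg; ring.
set S := \sum_(i < q.+2) _.
have HS : S = - S.
  rewrite {1}/S exchange_big /S /= -sumrN; apply: eq_bigr => y _.
  rewrite -sumrN; apply: eq_bigr => x _; exact: anti.
have : S + S = 0 by rewrite {1}HS addNr.
rewrite -mulr2n -mulr_natl => /eqP; rewrite mulf_eq0 pnatr_eq0 /=.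
by move/eqP.
Qed.

End Aux.

Section Aux2.
Variables (R : realType) (n : nat).
Notation V := 'rV[R]_n.

Lemma wedge_addl p q (c : R) (f g : mform R n p) (h : mform R n q) v :
  wedge (form_add (form_scale c f) g) h v = c * wedge f h v + wedge g h v.
Proof.
rewrite /wedge /form_add /form_scale mulrCA -mulrDr; congr (_ * _).
rewrite big_distrr -big_split; apply: eq_bigr => s _.
by rewrite /= mulrDr mulrDl [_ * (c * _)]mulrCA -[c * _ * _]mulrA.
Qed.

Lemma wedge_addr p q (c : R) (f : mform R n p) (g h : mform R n q) v :
  wedge f (form_add (form_scale c g) h) v = c * wedge f g v + wedge f h v.
Proof.
rewrite /wedge /form_add /form_scale mulrCA -mulrDr; congr (_ * _).
rewrite big_distrr -big_split; apply: eq_bigr => s _.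
by rewrite /= mulrDr [_ * (c * _)]mulrCA.
Qed.

Lemma kform_comb k (c : R) (f g : mform R n k) : is_kform f -> is_kform g ->
  is_kform (form_add (form_scale c f) g).
Proof.
move=> [Hf Af] [Hg Ag]; split.
  move=> v i a x y; rewrite /form_add /form_scale Hf Hg; ring.
by move=> v i j ij e; rewrite /form_add /form_scale (Af v i j) // (Ag v i j) // mulr0 addr0.
Qed.

Lemma kform0 k : is_kform (@form0 R n k).
Proof. by split => [v i a x y|v i j _ _]; rewrite /form0 ?mulr0 ?addr0. Qed.

Lemma mlin_sum k (f : mform R n k) : multilinear f -> forall (I : Type) (r : seq I)
  (c : I -> R) (x : I -> V) w i,
  f (upd w i (\sum_(m <- r) c m *: x m)) = \sum_(m <- r) c m * f (upd w i (x m)).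
Proof.
move=> Hf I r c x w i; elim: r => [|m r IH].
  rewrite !big_nil; have := Hf w i 1 0 0; rewrite scale1r addr0 mul1r => /eqP.
  by rewrite eq_sym -subr_eq0 addrK => /eqP.
by rewrite !big_cons Hf IH.
Qed.

Definition E (m : 'I_n) : mform R n 1 := fun u => u ord0 0 m.

Lemma kformE m : is_kform (E m).
Proof.
split; last by move=> v i j ij; move: ij; rewrite (ord1 i) (ord1 j) eqxx.
move=> v i a x y; rewrite /E /upd (ord1 i) eqxx !mxE; done.
Qed.

Lemma form1E (th : mform R n 1) : is_kform th -> forall u,
  th u = \sum_(m < n) u ord0 0 m * th (fun _ => delta_mx 0 m).
Proof.
move=> [Hm _] u.
have e : forall x : V, th (fun _ : 'I_1 => x) = th (upd u ord0 x).
  by move=> x; congr th; apply: functional_extensionality => i; rewrite /upd (ord1 i) eqxx.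
rewrite (eq_bigr (fun m => u ord0 0 m * th (upd u ord0 (delta_mx 0 m)))) => [|m _]; last by rewrite e.
by rewrite -mlin_sum // -row_sum_delta upd_id.
Qed.

End Aux2.

Section Aux3.
Variables (R : realType) (n : nat).
Notation V := 'rV[R]_n.

Lemma L_expand k (L : mform R n 1 -> mform R n k) : linear_map_1k L ->
  forall th, is_kform th -> forall w,
  L th w = \sum_(m < n) th (fun _ => delta_mx 0 m) * L (E m) w.
Proof.
move=> [HLf HLl] th Hth w.
pose S (r : seq 'I_n) : mform R n 1 :=
  fun u => \sum_(m <- r) th (fun _ => delta_mx 0 m) * E m u.
have HS : forall r, is_kform (S r) /\ forall w,
    L (S r) w = \sum_(m <- r) th (fun _ => delta_mx 0 m) * L (E m) w.
  elim => [|m r [IHf IHL]].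
    have S0 : S [::] = @form0 R n 1.
      by apply: functional_extensionality => u; rewrite /S big_nil.
    rewrite S0; split; first exact: kform0.
    move=> w'; rewrite big_nil.
    have := HLl 1 _ _ (kform0 R n 1) (kform0 R n 1).
    have -> : form_add (form_scale 1 (@form0 R n 1)) (@form0 R n 1) = @form0 R n 1.
      by apply: functional_extensionality => u; rewrite /form_add /form_scale /form0 mulr0 addr0.
    move=> e; have := congr1 (fun F => F w') e.
    rewrite /form_add /form_scale mul1r => /eqP.
    by rewrite eq_sym -subr_eq0 addrK => /eqP.
  have Sc : S (m :: r) = form_add (form_scale (th (fun _ => delta_mx 0 m)) (E m)) (S r).
    by apply: functional_extensionality => u; rewrite /S big_cons.
  rewrite Sc; split; first exact: kform_comb _ (kformE R m) IHf.
  move=> w'; rewrite HLl //; last exact: kformE.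
  by rewrite /form_add /form_scale /= IHL big_cons.
have eth : th = S (index_enum 'I_n).
  apply: functional_extensionality => u; rewrite form1E // /S.
  by apply: eq_bigr => m' _; rewrite mulrC.
rewrite {1}eth; exact: (HS _).2.
Qed.


Definition cons0 q (x : V) (u : 'I_q -> V) : 'I_q.+1 -> V :=
  fun j => if unlift ord0 j is Some j' then u j' else x.

Lemma cons0_0 q x (u : 'I_q -> V) : cons0 x u ord0 = x.
Proof. by rewrite /cons0 unlift_none. Qed.

Lemma cons0_lift q x (u : 'I_q -> V) j : cons0 x u (lift ord0 j) = u j.
Proof. by rewrite /cons0 liftK. Qed.

Lemma cons0_upd q x (u : 'I_q -> V) i y :
  cons0 x (upd u i y) = upd (cons0 x u) (lift ord0 i) y.
Proof.
apply: functional_extensionality => l; case: (unliftP ord0 l) => [l'|] ->.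
  by rewrite cons0_lift /upd (inj_eq lift_inj) cons0_lift.
rewrite cons0_0 /upd; case: eqP => [e|]; last by rewrite cons0_0.
by have := neq_lift ord0 i; rewrite -e eqxx.
Qed.

Lemma cons0_upd0 q x z (u : 'I_q -> V) : upd (cons0 z u) ord0 x = cons0 x u.
Proof.
apply: functional_extensionality => l; case: (unliftP ord0 l) => [l'|] ->.
  by rewrite /upd eq_sym (negbTE (neq_lift _ _)) !cons0_lift.
by rewrite /upd eqxx cons0_0.
Qed.

Lemma cons0_perm q (v : 'I_q.+1 -> V) j :
  cons0 (v j) (fun l => v (lift j l)) = (fun l => v (lift_perm ord0 j 1 l)).
Proof.
apply: functional_extensionality => l; case: (unliftP ord0 l) => [l'|] ->.
  by rewrite cons0_lift lift_perm_lift perm1.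
by rewrite cons0_0 lift_perm_id.
Qed.

Lemma cons0_liftlift q x (v : 'I_q.+1 -> V) (j : 'I_q.+1) :
  (fun l => cons0 x v (lift (lift ord0 j) l)) = cons0 x (fun l => v (lift j l)).
Proof.
apply: functional_extensionality => l; case: (unliftP ord0 l) => [l'|] ->.
  have -> : lift (lift ord0 j) (lift ord0 l') = lift ord0 (lift j l').
    by apply: val_inj; rewrite /= /bump; lia.
  by rewrite !cons0_lift.
have -> : lift (lift ord0 j) ord0 = ord0 :> 'I_q.+2.
  by apply: val_inj; rewrite /= /bump; lia.
by rewrite !cons0_0.
Qed.

Lemma wedge_cons q (a : mform R n 1) (b : mform R n q.+1) : antisym b ->
  forall x (v : 'I_q.+1 -> V), wedge a b (cons0 x v) =
  a (fun _ => x) * b v - \sum_(j < q.+1) (-1) ^+ j * a (fun _ => v j) *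
     b (cons0 x (fun l => v (lift j l))).
Proof.
move=> Hb x v; rewrite wedge1E // big_ord_recl expr0 mul1r cons0_0.
have -> : (fun j => cons0 x v (lift ord0 j)) = v.
  by apply: functional_extensionality => j; rewrite cons0_lift.
congr (_ + _); rewrite -sumrN; apply: eq_bigr => j _.
rewrite cons0_lift cons0_liftlift.
have -> : (-1) ^+ (lift (@ord0 q.+1) j) = - (-1) ^+ j :> R.
  by rewrite /= /bump /= add1n exprS mulN1r.
by rewrite !mulNr.
Qed.

Lemma antisym_cons q (F : mform R n q.+1) : antisym F -> forall (v : 'I_q.+1 -> V) j,
  F (cons0 (v j) (fun l => v (lift j l))) = (-1) ^+ j * F v.
Proof.
move=> HF v j; rewrite cons0_perm HF odd_lift_perm odd_perm1 addbF.
by rewrite /= signr_odd.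
Qed.

Lemma kform_cons_sum q (G : 'I_n -> mform R n q.+1) (c : R) :
  (forall m, is_kform (G m)) ->
  is_kform (fun u : 'I_q -> V => c * \sum_(m < n) G m (cons0 (delta_mx 0 m) u)).
Proof.
move=> HG; split.
  move=> u i a x y.
  rewrite (eq_bigr (fun m => a * G m (cons0 (delta_mx 0 m) (upd u i x)) +
     G m (cons0 (delta_mx 0 m) (upd u i y)))); last first.
    by move=> m _; rewrite !cons0_upd (proj1 (HG m)).
  by rewrite big_split /= -big_distrr /= mulrDr mulrCA.
move=> u i j ij e; rewrite big1 ?mulr0 // => m _.
apply: (proj2 (HG m) _ (lift ord0 i) (lift ord0 j)).
  by rewrite (inj_eq lift_inj).
by rewrite !cons0_lift.
Qed.

End Aux3.

Unset Implicit Arguments.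
Set Strict Implicit.

Theorem proposition4p1 (R : realType) (n k : nat) (hn : (2 <= n)%N)
  (hk : (0 < k)%N) (hkn : (k <= n)%N) (L : mform R n 1 -> mform R n k) :
  linear_map_1k L ->
  ((exists eta : mform R n k.-1, is_kform eta /\
      forall th : mform R n 1, is_kform th ->
        L th = cast_form (prednK hk) (wedge th eta))
   <->
   (forall th : mform R n 1, is_kform th -> wedge th (L th) = @form0 R n (1 + k))).
Proof.
case: k hk hkn L => [//|q] hk hkn L HL.
have [HLf HLl] := HL.
have cast_eq : forall f : mform R n (1 + q), cast_form (prednK hk) f = f.
  move=> f; apply: functional_extensionality => v; rewrite /cast_form; congr f.
  by apply: functional_extensionality => i; congr v; exact: val_inj.
split.
  move=> [eta [Heta HLe]] th Hth; apply: functional_extensionality => v.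
  rewrite HLe // cast_eq /form0.
  exact: wedge_self (form_antisym Heta) v.
move=> H.
set c : R := n%:R - q%:R.
have c0 : c != 0 by rewrite /c subr_eq0 eqr_nat; lia.
pose G m := L (E m).
have HG : forall m, is_kform (G m) := fun m => HLf _ (kformE R m).
pose eta := fun u : 'I_q -> 'rV[R]_n => c^-1 * \sum_(m < n) G m (cons0 (delta_mx 0 m) u).
have Heta : is_kform eta by exact: kform_cons_sum.
exists eta; split; first exact: Heta.
move=> th Hth; rewrite cast_eq; apply: functional_extensionality => v.
set F := L th.
have HF : is_kform F by exact: HLf.
have polar : forall ph, is_kform ph -> forall w, wedge th (L ph) w + wedge ph F w = 0.
  move=> ph Hph w.
  have := H _ (kform_comb 1 Hth Hph); rewrite HLl // => /(congr1 (fun f => f w)).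
  rewrite /form0 wedge_addl !wedge_addr.
  have h1 := congr1 (fun f => f w) (H th Hth); have h2 := congr1 (fun f => f w) (H ph Hph).
  rewrite /= /form0 in h1 h2; rewrite h1 h2 /F => <-; ring.
pose u (j : 'I_q.+1) := fun l => v (lift j l).
have key : \sum_(m < n) ((th (fun _ => delta_mx 0 m) * G m v -
      \sum_(j < q.+1) (-1) ^+ j * th (fun _ => v j) * G m (cons0 (delta_mx 0 m) (u j))) +
    (E m (fun _ => delta_mx 0 m) * F v -
      \sum_(j < q.+1) (-1) ^+ j * E m (fun _ => v j) * F (cons0 (delta_mx 0 m) (u j)))) = 0.
  rewrite big1 // => m _.
  rewrite -!wedge_cons; [exact: polar (kformE R m) _ | exact: form_antisym | exact: form_antisym].
have s1 : \sum_(m < n) th (fun _ => delta_mx 0 m) * G m v = F v.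
  by rewrite /F (L_expand HL Hth v).
have s2 : \sum_(m < n) \sum_(j < q.+1) (-1) ^+ j * th (fun _ => v j) * G m (cons0 (delta_mx 0 m) (u j))
    = c * wedge th eta v.
  rewrite exchange_big /= wedge1E; last exact: form_antisym.
  rewrite big_distrr; apply: eq_bigr => j _ /=.
  rewrite -big_distrr /eta [RHS]mulrCA [c * (_ * _)]mulrA mulfV // mul1r.
  done.
have s3 : \sum_(m < n) E m (fun _ => delta_mx 0 m) * F v = n%:R * F v.
  rewrite (eq_bigr (fun _ => F v)); last first.
    by move=> m _; rewrite /E mxE !eqxx mul1r.
  by rewrite sumr_const card_ord mulr_natl.
have s4 : \sum_(m < n) \sum_(j < q.+1) (-1) ^+ j * E m (fun _ => v j) * F (cons0 (delta_mx 0 m) (u j))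
    = (q.+1)%:R * F v.
  rewrite exchange_big /=.
  rewrite (eq_bigr (fun _ => F v)); last first.
    move=> j _.
    rewrite (eq_bigr (fun m => (-1) ^+ j * (v j 0 m * F (cons0 (delta_mx 0 m) (u j))))); last first.
      by move=> m _; rewrite /E mulrA.
    rewrite -big_distrr /=.
    have ml : \sum_(m < n) v j 0 m * F (cons0 (delta_mx 0 m) (u j)) = F (cons0 (v j) (u j)).
      rewrite -(cons0_upd0 (v j) 0) [in RHS](row_sum_delta (v j)) (mlin_sum (proj1 HF)).
      by apply: eq_bigr => m _; rewrite cons0_upd0.
    rewrite ml /u (antisym_cons (form_antisym HF)) mulrA -expr2 -exprM mulnC exprM expr2 mulN1r opprK.
    by rewrite expr1n mul1r.
  by rewrite sumr_const card_ord mulr_natl.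
rewrite big_split /= !sumrB s1 s2 s3 s4 in key.
apply: (mulfI c0).
have e : c * F v - c * wedge th eta v = 0.
  by rewrite -key /c -natr1; ring.
by apply/eqP; rewrite -subr_eq0 e.
Qed.
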